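(* Let $A,B\in\mathrm{M}_n(\mathbb{C})$ and let $p(x)=\sum_{k=0}^d a_kx^k\in\mathbb{C}[x]$ be a nonconstant polynomial of degree $d\geq 1$. Write $[A,B]=AB-BA$ and $p[A,B]=p(AB)-p(BA)$. Then (i) $\displaystyle \|p[A,B]\|_F\le \|[A,B]\|_F\sum_{k=1}^d |a_k|\,k\,\|A\|_F^{k-1}\|B\|_F^{k-1}$; (ii) $\displaystyle h(p[A,B])\le h([A,B])\sum_{k=1}^d |a_k|\,k\,2^{2k-1}\,h(A)^{k-1}h(B)^{k-1}$.
   Context: $\|X\|_F=\sqrt{\mathrm{trace}(X^*X)}$ is the Frobenius norm and $h(X)=\max\{|v^*Xv| : v\in\mathbb{C}^n,\ \|v\|=1\}$ is the numerical radius of $X\in\mathrm{M}_n(\mathbb{C})$. *)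

(* Defs.v *)
From HB Require Import structures.
From mathcomp Require Import all_boot all_order all_algebra.
From mathcomp Require Import complex.
From mathcomp Require Import classical_sets reals.

Set Implicit Arguments.
Unset Strict Implicit.
Unset Printing Implicit Defensive.
Import Order.TTheory GRing.Theory Num.Theory.
Local Open Scope ring_scope.
Local Open Scope classical_set_scope.

Definition cabs (R : realType) (z : R[i]) : R := Normc.normc z.

Definition peval_mx (R : realType) (n : nat) (p : {poly R[i]}) (M : 'M[R[i]]_n)
  : 'M[R[i]]_n := \sum_(k < size p) p`_k *: M ^+ k.

Definition commmx (R : realType) (n : nat) (A B : 'M[R[i]]_n) : 'M[R[i]]_n :=
  A *m B - B *m A.

Definition pcommmx (R : realType) (n : nat) (p : {poly R[i]}) (A B : 'M[R[i]]_n)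
  : 'M[R[i]]_n := peval_mx p (A *m B) - peval_mx p (B *m A).

Definition frob (R : realType) (n : nat) (X : 'M[R[i]]_n) : R :=
  Num.sqrt (\sum_(i < n) \sum_(j < n) cabs (X i j) ^+ 2).

Definition vnorm (R : realType) (n : nat) (v : 'cV[R[i]]_n) : R :=
  Num.sqrt (\sum_(i < n) cabs (v i 0) ^+ 2).

Definition qform (R : realType) (n : nat) (X : 'M[R[i]]_n) (v : 'cV[R[i]]_n)
  : R[i] := ((map_mx conjc v)^T *m X *m v) 0 0.

(* numerical radius h(X) = max { |v^* X v| : ||v|| = 1 } (written as a sup;
   the max is attained in finite dimension) *)
Definition numrad (R : realType) (n : nat) (X : 'M[R[i]]_n) : R :=
  sup [set cabs (qform X v) | v in [set v : 'cV[R[i]]_n | vnorm v = 1]].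

(* Main.v *)
Require Import Defs.
From HB Require Import structures.
From mathcomp Require Import all_boot all_order all_algebra.
From mathcomp Require Import complex ring lra zify.
From mathcomp Require Import boolp classical_sets reals.
Import Order.TTheory GRing.Theory Num.Theory.
Set Implicit Arguments. Unset Strict Implicit. Unset Printing Implicit Defensive.
Local Open Scope ring_scope.
Local Open Scope complex_scope.

Section S.
Variable R : realType.
Local Notation C := R[i].

Lemma cabsE (z : C) : `|z| = (cabs z)%:C.
Proof. by rewrite normc_def; case: z. Qed.

Lemma cabs_ge0 (z : C) : 0 <= cabs z.
Proof. by rewrite -lecR rmorph0 -cabsE. Qed.

Lemma cabsD (x y : C) : cabs (x + y) <= cabs x + cabs y.
Proof. by rewrite -lecR rmorphD /= -!cabsE ler_normD. Qed.

Lemma cabsM (x y : C) : cabs (x * y) = cabs x * cabs y.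
Proof. by apply: complexI; rewrite rmorphM /= -!cabsE normrM. Qed.

Lemma cabsN (x : C) : cabs (- x) = cabs x.
Proof. by apply: complexI; rewrite -!cabsE normrN. Qed.

Lemma cabsJ (x : C) : cabs ((conjc x)) = cabs x.
Proof. by apply: complexI; rewrite -!cabsE normcJ. Qed.

Lemma cabs2 (x : C) : (cabs x ^+ 2)%:C = x * (conjc x).
Proof. by rewrite rmorphXn /= -cabsE sqr_normc. Qed.

Lemma cabsR (r : R) : 0 <= r -> cabs r%:C = r.
Proof. by move=> r0; apply: complexI; rewrite -cabsE ger0_norm // ler0c. Qed.

Lemma cabs_sum (I : Type) (r : seq I) (F : I -> C) :
  cabs (\sum_(i <- r) F i) <= \sum_(i <- r) cabs (F i).
Proof.
elim: r => [|a r IH]; first by rewrite !big_nil /cabs Normc.normc0.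
rewrite !big_cons; apply: le_trans (cabsD _ _) _; exact: lerD.
Qed.

Lemma cabs0 : cabs (0 : C) = 0.
Proof. exact: Normc.normc0. Qed.

Lemma CS (I : finType) (a b : I -> R) :
  (\sum_i a i * b i) ^+ 2 <= (\sum_i a i ^+ 2) * (\sum_i b i ^+ 2).
Proof.
set SA := \sum_i a i ^+ 2; set SB := \sum_i b i ^+ 2; set S := \sum_i _.
have E : \sum_i \sum_j (a i * b j - a j * b i) ^+ 2 =
  2%:R * (SA * SB - S ^+ 2).
  have -> : \sum_i \sum_j (a i * b j - a j * b i) ^+ 2 =
     \sum_i \sum_j (a i ^+ 2 * b j ^+ 2) + \sum_i \sum_j (b i ^+ 2 * a j ^+ 2)
     - \sum_i \sum_j (2%:R * ((a i * b i) * (a j * b j))).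
    rewrite -big_split -sumrB /=; apply: eq_bigr => i _.
    rewrite -big_split -sumrB /=; apply: eq_bigr => j _; ring.
  rewrite -!big_distrlr /= -/SA -/SB.
  rewrite (eq_bigr (fun i => 2%:R * ((a i * b i) * S))); last first.
    by move=> i _; rewrite /S mulr_sumr mulr_sumr; apply: eq_bigr => j _.
  rewrite -mulr_sumr -mulr_suml -/S; ring.
have : 0 <= \sum_i \sum_j (a i * b j - a j * b i) ^+ 2.
  by apply: sumr_ge0 => i _; apply: sumr_ge0 => j _; apply: sqr_ge0.
rewrite E pmulr_rge0 ?ltr0n // subr_ge0 //.
Qed.

Lemma CS' (I : finType) (a b : I -> R) :
  \sum_i a i * b i <= Num.sqrt (\sum_i a i ^+ 2) * Num.sqrt (\sum_i b i ^+ 2).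
Proof.
rewrite -sqrtrM; last by apply: sumr_ge0 => i _; apply: sqr_ge0.
apply: le_trans (ler_norm _) _; rewrite -sqrtr_sqr ler_sqrt ?CS //.
by apply: mulr_ge0; apply: sumr_ge0 => i _; apply: sqr_ge0.
Qed.

Lemma sq_le (u v : R) : 0 <= u -> u <= v -> u ^+ 2 <= v ^+ 2.
Proof. by move=> u0 uv; rewrite ler_pXn2r // ?nnegrE // (le_trans u0 uv). Qed.

Definition l2m m p (X : 'M[C]_(m, p)) : R :=
  Num.sqrt (\sum_(i < m) \sum_(j < p) cabs (X i j) ^+ 2).

Lemma l2m_ge0 m p (X : 'M[C]_(m, p)) : 0 <= l2m X.
Proof. exact: sqrtr_ge0. Qed.

Lemma l2m_pair m p (X : 'M[C]_(m, p)) :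
  l2m X = Num.sqrt (\sum_(q : 'I_m * 'I_p) cabs (X q.1 q.2) ^+ 2).
Proof. by rewrite /l2m pair_big. Qed.

Lemma l2m_add m p (X Y : 'M[C]_(m, p)) : l2m (X + Y) <= l2m X + l2m Y.
Proof.
rewrite !l2m_pair.
set x := fun q : 'I_m * 'I_p => cabs (X q.1 q.2).
set y := fun q : 'I_m * 'I_p => cabs (Y q.1 q.2).
have x0 : forall q, 0 <= x q by move=> q; apply: cabs_ge0.
have y0 : forall q, 0 <= y q by move=> q; apply: cabs_ge0.
apply: (@le_trans _ _ (Num.sqrt (\sum_q (x q + y q) ^+ 2))).
  rewrite ler_sqrt; last by apply: sumr_ge0 => q _; apply: sqr_ge0.
  apply: ler_sum => q _; rewrite mxE; apply: sq_le; first exact: cabs_ge0.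
  exact: cabsD.
rewrite -[X in _ <= X]ger0_norm ?addr_ge0 ?sqrtr_ge0 // -sqrtr_sqr ler_sqrt;
  last exact: sqr_ge0.
have -> : \sum_q (x q + y q) ^+ 2 =
   \sum_q x q ^+ 2 + 2%:R * \sum_q x q * y q + \sum_q y q ^+ 2.
  rewrite mulr_sumr -!big_split /=; apply: eq_bigr => q _; ring.
have hc := CS' x y.
have hx := sqr_sqrtr (sumr_ge0 _ (fun q _ => sqr_ge0 (x q))).
have hy := sqr_sqrtr (sumr_ge0 _ (fun q _ => sqr_ge0 (y q))).
rewrite -[\sum_q x q ^+ 2 in X in X <= _]hx -[\sum_q y q ^+ 2 in X in X <= _]hy.
lra.
Qed.

Lemma sum_sq_ge0 (I : finType) (f : I -> R) : 0 <= \sum_i f i ^+ 2.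
Proof. by apply: sumr_ge0 => i _; apply: sqr_ge0. Qed.

Lemma l2m_mul m k p (X : 'M[C]_(m, k)) (Y : 'M[C]_(k, p)) :
  l2m (X *m Y) <= l2m X * l2m Y.
Proof.
rewrite /l2m -sqrtrM; last by apply: sumr_ge0 => i _; apply: sum_sq_ge0.
rewrite ler_sqrt; last first.
  by apply: mulr_ge0; apply: sumr_ge0 => i _; apply: sum_sq_ge0.
rewrite [X in _ <= _ * X](exchange_big) big_distrlr /=.
apply: ler_sum => i _; apply: ler_sum => j _.
rewrite mxE.
apply: (@le_trans _ _ ((\sum_l cabs (X i l) * cabs (Y l j)) ^+ 2)).
  apply: sq_le; first exact: cabs_ge0.
  apply: le_trans (cabs_sum _ _) _; apply: ler_sum => l _.
  by rewrite cabsM.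
exact: (CS (fun l => cabs (X i l)) (fun l => cabs (Y l j))).
Qed.

Lemma l2m_scale m p (c : C) (X : 'M[C]_(m, p)) : l2m (c *: X) = cabs c * l2m X.
Proof.
rewrite /l2m.
have -> : \sum_i \sum_j cabs ((c *: X) i j) ^+ 2 =
     cabs c ^+ 2 * \sum_i \sum_j cabs (X i j) ^+ 2.
  rewrite mulr_sumr; apply: eq_bigr => i _; rewrite mulr_sumr.
  by apply: eq_bigr => j _; rewrite mxE cabsM exprMn.
by rewrite sqrtrM ?sqr_ge0 // sqrtr_sqr ger0_norm // cabs_ge0.
Qed.

Lemma l2m0 m p : l2m (0 : 'M[C]_(m, p)) = 0.
Proof.
rewrite /l2m big1 ?sqrtr0 // => i _; rewrite big1 // => j _.
by rewrite mxE cabs0 expr0n.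
Qed.

Lemma l2m_sum m p (I : Type) (r : seq I) (F : I -> 'M[C]_(m, p)) :
  l2m (\sum_(i <- r) F i) <= \sum_(i <- r) l2m (F i).
Proof.
elim: r => [|a r IH]; first by rewrite !big_nil l2m0.
rewrite !big_cons; apply: le_trans (l2m_add _ _) _; exact: lerD.
Qed.

Lemma l2m_conjT n (v : 'cV[C]_n) : l2m ((map_mx conjc v)^T) = l2m v.
Proof.
rewrite /l2m exchange_big /=; congr Num.sqrt; apply: eq_bigr => i _.
by apply: eq_bigr => j _; rewrite !mxE cabsJ.
Qed.

Lemma l2m11 (M : 'M[C]_1) : l2m M = cabs (M 0 0).
Proof.
by rewrite /l2m !big_ord1 sqrtr_sqr ger0_norm // cabs_ge0.
Qed.

Lemma vnormE n (v : 'cV[C]_n) : vnorm v = l2m v.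
Proof. by rewrite /l2m /vnorm; congr Num.sqrt; apply: eq_bigr => i _; rewrite big_ord1. Qed.

Lemma frobE n (X : 'M[C]_n) : frob X = l2m X.
Proof. by []. Qed.


Definition dot n (u w : 'cV[C]_n) : C := \sum_i (conjc (u i 0)) * w i 0.

Lemma dotE n (u w : 'cV[C]_n) : dot u w = ((map_mx conjc u)^T *m w) 0 0.
Proof. by rewrite mxE; apply: eq_bigr => i _; rewrite !mxE. Qed.

Lemma qformE n (X : 'M[C]_n) v : qform X v = dot v (X *m v).
Proof. by rewrite /qform -mulmxA dotE. Qed.

Lemma dot_cs n (u w : 'cV[C]_n) : cabs (dot u w) <= l2m u * l2m w.
Proof. by rewrite dotE -l2m11 -[l2m u]l2m_conjT; apply: l2m_mul. Qed.

Lemma dot_self n (v : 'cV[C]_n) : dot v v = (l2m v ^+ 2)%:C.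
Proof.
rewrite /l2m sqr_sqrtr; last by apply: sumr_ge0 => i _; apply: sum_sq_ge0.
rewrite rmorph_sum; apply: eq_bigr => i _; rewrite big_ord1.
by rewrite mulrC -cabs2.

Qed.

Lemma dotDl n (u w z : 'cV[C]_n) c : dot (u + c *: w) z = dot u z + (conjc c) * dot w z.
Proof.
rewrite /dot mulr_sumr -big_split; apply: eq_bigr => i _ /=.
by rewrite !mxE rmorphD rmorphM /= mulrDl mulrA.
Qed.

Lemma dotDr n (u w z : 'cV[C]_n) c : dot z (u + c *: w) = dot z u + c * dot z w.
Proof.
rewrite /dot mulr_sumr -big_split; apply: eq_bigr => i _ /=.
by rewrite !mxE mulrDr mulrCA.
Qed.

Lemma qform_exp n (X : 'M[C]_n) u w c :
  qform X (u + c *: w) =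
  qform X u + c * dot u (X *m w) + (conjc c) * dot w (X *m u) + (conjc c) * c * qform X w.
Proof.
rewrite !qformE mulmxDr -scalemxAr dotDl !dotDr.
rewrite mulrDr -!addrA; congr (_ + _); rewrite mulrA; ring.
Qed.

Lemma conj_i : (conjc ('i : C)) = - 'i.
Proof. by apply/eqP; rewrite eq_complex /= oppr0 !eqxx. Qed.

Lemma polar_alg (x a b e f : C) (G : C -> C) : x ^+ 2 = -1 -> (conjc x) = - x ->
  (forall c, G c = a + c * b + (conjc c) * e + (conjc c) * c * f) ->
  4%:R * b = G 1 - G (-1) - x * G x + x * G (-x)
  /\ 4%:R * (a + f) = G 1 + G (-1) + G x + G (-x).
Proof.
move=> hx hc HG.
have h1 : (conjc (1 : C)) = 1 by apply: rmorph1.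
have hm1 : (conjc (-1 : C)) = -1 by apply: rmorphN1.
have hmx : (conjc (- x)) = x.
  have ee : conjc (-x) = - (conjc x) := raddfN _ x.
  by rewrite ee hc opprK.
rewrite !HG h1 hm1 hmx hc.
split; apply/eqP; rewrite eq_sym -subr_eq0; apply/eqP.
  set L := (X in X = 0).
  have -> : L = (x ^+ 2 + 1) * (2%:R * e - 2%:R * b) by rewrite /L; ring.
  by rewrite hx addNr mul0r.
set L := (X in X = 0).
have -> : L = (x ^+ 2 + 1) * (- 2%:R * f) by rewrite /L; ring.
by rewrite hx addNr mul0r.
Qed.


Lemma qformZ n (X : 'M[C]_n) (c : C) v :
  qform X (c *: v) = conjc c * c * qform X v.
Proof.
rewrite !qformE -scalemxAr /dot !mulr_sumr; apply: eq_bigr => i _.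
rewrite !mxE rmorphM /=; ring.
Qed.

Lemma qform_frob n (X : 'M[C]_n) v : cabs (qform X v) <= frob X * l2m v ^+ 2.
Proof.
rewrite qformE; apply: le_trans (dot_cs _ _) _.
rewrite frobE expr2 mulrA [X in _ <= X]mulrC.
apply: ler_wpM2l; first exact: l2m_ge0.
exact: l2m_mul.
Qed.

Lemma numrad_ub n (X : 'M[C]_n) v : vnorm v = 1 -> cabs (qform X v) <= numrad X.
Proof.
move=> hv; apply: ub_le_sup; last by exists v.
exists (frob X) => y [w hw <-].
apply: le_trans (qform_frob _ _) _.
by rewrite -vnormE hw expr1n mulr1.
Qed.

Local Open Scope classical_set_scope.

Lemma numrad_le n (X : 'M[C]_n) c : 0 <= c ->
  (forall v, vnorm v = 1 -> cabs (qform X v) <= c) -> numrad X <= c.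
Proof.
move=> c0 H; rewrite /numrad.
set S := [set _ | _ in _].
have [[y Sy]|nS] := pselect (exists y, S y).
  by apply: ge_sup; [exists y | move=> z [w hw <-]; apply: H].
have -> : S = set0.
  by apply/seteqP; split => z // Sz; apply: nS; exists z.
by rewrite sup0.
Qed.

Lemma numrad_ge0 n (X : 'M[C]_n) : 0 <= numrad X.
Proof.
rewrite /numrad; set S := [set _ | _ in _].
have [[y Sy]|nS] := pselect (exists y, S y).
  case: (Sy) => w hw hy.
  by apply: le_trans (numrad_ub X hw); rewrite hy; case: Sy => w' _ <-; apply: cabs_ge0.
have -> : S = set0.
  by apply/seteqP; split => z // Sz; apply: nS; exists z.
by rewrite sup0.
Qed.

Lemma numrad_Q n (X : 'M[C]_n) v : cabs (qform X v) <= numrad X * l2m v ^+ 2.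
Proof.
have [s0|s0] := eqVneq (l2m v) 0.
  apply: le_trans (qform_frob _ _) _.
  by rewrite s0 expr0n /= !mulr0.
have sp : 0 < l2m v by rewrite lt_def s0 l2m_ge0.
set s := l2m v in s0 sp *.
pose c : C := (s^-1)%:C.
have hc : cabs c = s^-1 by rewrite /c cabsR // invr_ge0 ltW.
have hv : vnorm (c *: v) = 1 by rewrite vnormE l2m_scale hc mulVf.
have := numrad_ub X hv.
rewrite qformZ !cabsM cabsJ hc => H.
have -> : cabs (qform X v) = s^-1 * s^-1 * cabs (qform X v) * s ^+ 2.
  by field.
by apply: ler_wpM2r => //; apply: sqr_ge0.
Qed.


Lemma cabs_i : cabs ('i : C) = 1.
Proof. by rewrite /cabs /Normc.normc /= expr0n /= add0r expr1n sqrtr1. Qed.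

Lemma qform1 n (v : 'cV[C]_n) : qform 1%:M v = (l2m v ^+ 2)%:C.
Proof. by rewrite qformE mul1mx dot_self. Qed.

Lemma polar n (X : 'M[C]_n) u w :
  cabs (dot u (X *m w)) <= numrad X * (l2m u ^+ 2 + l2m w ^+ 2).
Proof.
set h := numrad X.
pose G c := qform X (u + c *: w).
pose N c := qform 1%:M (u + c *: w).
have [H1 _] := @polar_alg 'i (qform X u) (dot u (X *m w)) (dot w (X *m u))
   (qform X w) G (sqr_i R) conj_i (fun c => qform_exp X u w c).
have [_ H2] := @polar_alg 'i (qform 1%:M u) (dot u (1%:M *m w)) (dot w (1%:M *m u))
   (qform 1%:M w) N (sqr_i R) conj_i (fun c => qform_exp 1%:M u w c).
pose L c := l2m (u + c *: w) ^+ 2.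
have HN : 4%:R * (l2m u ^+ 2 + l2m w ^+ 2) = L 1 + L (-1) + L 'i + L (-'i).
  rewrite /N !qform1 in H2.
  apply: complexI; rewrite rmorphM rmorph_nat !rmorphD.
  exact: H2.
have HG : forall c, cabs (G c) <= h * L c by move=> c; apply: numrad_Q.
have c4 : cabs (4%:R : C) = 4%:R.
  by rewrite -(rmorph_nat (real_complex R)) cabsR ?ler0n.
have key : 4%:R * cabs (dot u (X *m w)) <= h * (4%:R * (l2m u ^+ 2 + l2m w ^+ 2)).
  rewrite -{1}c4 -cabsM H1 HN !mulrDr.
  apply: le_trans (cabsD _ _) _; apply: lerD; last first.
    by rewrite cabsM cabs_i mul1r.
  apply: le_trans (cabsD _ _) _; apply: lerD; last first.
    by rewrite cabsN cabsM cabs_i mul1r.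
  apply: le_trans (cabsD _ _) _; apply: lerD => //.
  by rewrite cabsN.
rewrite mulrCA in key.
by rewrite -(ler_pM2l (_ : 0 < 4%:R :> R)) ?ltr0n.
Qed.


Lemma dotZl n (u z : 'cV[C]_n) c : dot (c *: u) z = conjc c * dot u z.
Proof.
rewrite /dot mulr_sumr; apply: eq_bigr => i _.
by rewrite !mxE rmorphM /= mulrA.
Qed.

Lemma dotZr n (u z : 'cV[C]_n) c : dot z (c *: u) = c * dot z u.
Proof.
rewrite /dot mulr_sumr; apply: eq_bigr => i _.
by rewrite !mxE mulrCA.
Qed.

Definition ob n (X : 'M[C]_n) (c : R) := forall w : 'cV[C]_n, l2m (X *m w) <= c * l2m w.

Lemma ob_numrad n (X : 'M[C]_n) : ob X (2%:R * numrad X).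
Proof.
move=> w; set a := l2m (X *m w); set b := l2m w; set h := numrad X.
have h0 : 0 <= h := numrad_ge0 X.
have a0 : 0 <= a := l2m_ge0 _.
have b0 : 0 <= b := l2m_ge0 _.
have [b_0|bn] := eqVneq b 0.
  have : a <= frob X * b := l2m_mul X w.
  by rewrite b_0 !mulr0.
have [a_0|an] := eqVneq a 0.
  by rewrite a_0; apply: mulr_ge0 => //; apply: mulr_ge0.
have ap : 0 < a by rewrite lt_def an a0.
have bp : 0 < b by rewrite lt_def bn b0.
have := polar X (b%:C *: (X *m w)) (a%:C *: w).
rewrite dotZl -scalemxAr dotZr dot_self !l2m_scale !cabsM cabsJ !cabsR //;
  last by apply: sqr_ge0.
rewrite -/a -/b -/h.
have -> : b * (a * a ^+ 2) = (a ^+ 2 * b) * a by ring.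
have -> : h * ((b * a) ^+ 2 + (a * b) ^+ 2) = (a ^+ 2 * b) * (2%:R * h * b) by ring.
by rewrite ler_pM2l; last by apply: mulr_gt0 => //; apply: exprn_gt0.
Qed.

Lemma ob_mul n (X Y : 'M[C]_n) c d : 0 <= c -> ob X c -> ob Y d -> ob (X *m Y) (c * d).
Proof.
move=> c0 hX hY w; rewrite -mulmxA; apply: le_trans (hX _) _.
by rewrite -mulrA; apply: ler_wpM2l.
Qed.

Lemma ob_pow n (X : 'M[C]_n) c : 0 <= c -> ob X c -> forall j, ob (X ^+ j) (c ^+ j).
Proof.
move=> c0 hX; elim=> [|j IH].
  by move=> w; rewrite expr0 expr0 mul1mx mul1r.
rewrite exprS exprS -mulmxE; exact: ob_mul.
Qed.

Lemma qformD n (X Y : 'M[C]_n) v : qform (X + Y) v = qform X v + qform Y v.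
Proof.
rewrite !qformE mulmxDl /dot -big_split /=; apply: eq_bigr => i _.
by rewrite mxE mulrDr.
Qed.

Lemma qform_sum n (I : Type) (r : seq I) (F : I -> 'M[C]_n) v :
  qform (\sum_(i <- r) F i) v = \sum_(i <- r) qform (F i) v.
Proof.
elim: r => [|a r IH]; first by rewrite !big_nil qformE mul0mx /dot big1 // => i _; rewrite mxE mulr0.
by rewrite !big_cons qformD IH.
Qed.

Lemma qformZl n (X : 'M[C]_n) c v : qform (c *: X) v = c * qform X v.
Proof. by rewrite !qformE -scalemxAl dotZr. Qed.

Lemma l2m_powl n (Y Z : 'M[C]_n) j : l2m (Y ^+ j * Z) <= l2m Y ^+ j * l2m Z.
Proof.
elim: j => [|j IH]; first by rewrite expr0 mul1r expr0 mul1r.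
rewrite exprS -mulrA -[Y * _]/(Y *m _).
apply: le_trans (l2m_mul _ _) _.
by rewrite exprS -mulrA; apply: ler_wpM2l => //; apply: l2m_ge0.
Qed.

Lemma l2m_powr n (Y Z : 'M[C]_n) j : l2m (Z * Y ^+ j) <= l2m Z * l2m Y ^+ j.
Proof.
elim: j => [|j IH]; first by rewrite expr0 mulr1 expr0 mulr1.
rewrite exprSr mulrA -[_ * Y]/(_ *m Y).
apply: le_trans (l2m_mul _ _) _.
rewrite exprSr mulrA; apply: ler_wpM2r => //; apply: l2m_ge0.
Qed.

Lemma telescope (T : pzRingType) (X Y : T) k :
  X ^+ k - Y ^+ k = \sum_(j < k) X ^+ j * (X - Y) * Y ^+ (k.-1 - j).
Proof.
elim: k => [|k IH]; first by rewrite big_ord0 !expr0 subrr.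
rewrite big_ord_recr /= subnn expr0 mulr1.
have -> : \sum_(j < k) X ^+ j * (X - Y) * Y ^+ (k - j) =
          (\sum_(j < k) X ^+ j * (X - Y) * Y ^+ (k.-1 - j)) * Y.
  rewrite mulr_suml; apply: eq_bigr => j _; rewrite -[RHS]mulrA -exprSr.
  congr (_ * _ * Y ^+ _); have := ltn_ord j; lia.
rewrite -IH mulrBl mulrBr -!exprSr.
by rewrite addrC addrA subrK.
Qed.



Lemma reshape (p : {poly C}) (g : nat -> R) (c : R) : (1 < size p)%N ->
  \sum_(k < size p) cabs p`_k * \sum_(j < k) (c * g k) =
  c * \sum_(1 <= k < ((size p).-1).+1) cabs p`_k * k%:R * g k.
Proof.
move=> hp; rewrite prednK; last by apply: ltnW.
rewrite -(big_mkord xpredT (fun k => cabs p`_k * \sum_(j < k) (c * g k))).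
rewrite (big_ltn (ltnW hp)) big_ord0 mulr0 add0r mulr_sumr.
apply: eq_bigr => k _; rewrite sumr_const card_ord -mulr_natr; ring.
Qed.

Lemma num2 (a b c : R) (j m : nat) :
  (2%:R*a*(2%:R*b))^+j * (2%:R*c) * (2%:R*b*(2%:R*a))^+m =
  c * (2%:R^+(2*(j+m)).+1 * a^+(j+m) * b^+(j+m)).
Proof. rewrite exprS mulnC exprM !exprD !exprMn; ring. Qed.

End S.

Lemma nat2 k : (0 < k)%N -> (2 * k.-1).+1 = (2 * k).-1.
Proof. by case: k => // k _; rewrite mulnS. Qed.

Local Close Scope complex_scope.

Theorem theorem5p1 (R : realType) (n : nat) (A B : 'M[R[i]]_n)
    (p : {poly R[i]}) (hp : (1 < size p)%N) :
  let d := (size p).-1 in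
  frob (pcommmx p A B)
    <= frob (commmx A B) *
       \sum_(1 <= k < d.+1) cabs p`_k * k%:R * frob A ^+ k.-1 * frob B ^+ k.-1
  /\
  numrad (pcommmx p A B)
    <= numrad (commmx A B) *
       \sum_(1 <= k < d.+1)
          cabs p`_k * k%:R * 2%:R ^+ (2 * k).-1 * numrad A ^+ k.-1 * numrad B ^+ k.-1.
Proof.
move=> d.
set AB := A *m B; set BA := B *m A; set Cm := commmx A B.
have decomp : pcommmx p A B =
    \sum_(k < size p) p`_k *: \sum_(j < k) (AB ^+ j * Cm * BA ^+ (k.-1 - j)).
  rewrite /pcommmx /peval_mx -sumrB; apply: eq_bigr => k _.
  by rewrite -scalerBr telescope.
have hjk : forall k (j : 'I_k), (j + (k.-1 - j) = k.-1)%N.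
  by move=> k j; have := ltn_ord j; lia.
split.
  rewrite decomp !frobE.
  have -> : l2m Cm * \sum_(1 <= k < d.+1)
        cabs p`_k * k%:R * l2m A ^+ k.-1 * l2m B ^+ k.-1 =
      \sum_(k < size p) cabs p`_k *
        \sum_(j < k) (l2m Cm * (l2m A ^+ k.-1 * l2m B ^+ k.-1)).
    rewrite (reshape (fun k => l2m A ^+ k.-1 * l2m B ^+ k.-1)) //.
    by congr (_ * _); apply: eq_bigr => k _; rewrite mulrA.
  apply: le_trans (l2m_sum _ _) _; apply: ler_sum => k _.
  rewrite l2m_scale; apply: ler_wpM2l; first exact: cabs_ge0.
  apply: le_trans (l2m_sum _ _) _; apply: ler_sum => j _.
  apply: le_trans (l2m_powr _ _ _) _.
  have hAB : l2m AB <= l2m A * l2m B := l2m_mul _ _.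
  have hBA : l2m BA <= l2m B * l2m A := l2m_mul _ _.
  apply: (@le_trans _ _ (l2m AB ^+ j * l2m Cm * l2m BA ^+ (k.-1 - j))).
    apply: ler_wpM2r; first by apply: exprn_ge0; apply: l2m_ge0.
    exact: l2m_powl.
  apply: (@le_trans _ _ ((l2m A * l2m B) ^+ j * l2m Cm * (l2m B * l2m A) ^+ (k.-1 - j))).
    apply: ler_pM; first by apply: mulr_ge0; [apply: exprn_ge0|]; apply: l2m_ge0.
    - by apply: exprn_ge0; apply: l2m_ge0.
    - apply: ler_wpM2r; first exact: l2m_ge0.
      by apply: lerXn2r => //; rewrite ?nnegrE ?l2m_ge0 ?mulr_ge0 ?l2m_ge0.
    - by apply: lerXn2r => //; rewrite ?nnegrE ?l2m_ge0 ?mulr_ge0 ?l2m_ge0.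
  move: (hjk k j); set m := (k.-1 - j)%N => e.
  rewrite -e !exprMn !exprD.
  rewrite le_eqVlt; apply/orP; left; apply/eqP; ring.
set hA := numrad A; set hB := numrad B; set hC := numrad Cm.
have hA0 : 0 <= hA := numrad_ge0 A.
have hB0 : 0 <= hB := numrad_ge0 B.
have hC0 : 0 <= hC := numrad_ge0 Cm.
have two0 : 0 <= 2%:R :> R by apply: ler0n.
apply: numrad_le.
  apply: (mulr_ge0 hC0); apply: sumr_ge0 => k _.
  exact: (mulr_ge0 (mulr_ge0 (mulr_ge0 (mulr_ge0 (cabs_ge0 _) (ler0n _ _))
     (exprn_ge0 _ two0)) (exprn_ge0 _ hA0)) (exprn_ge0 _ hB0)).
move=> v hv; rewrite decomp qform_sum.
have -> : hC * \sum_(1 <= k < d.+1)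
      cabs p`_k * k%:R * 2%:R ^+ (2 * k).-1 * hA ^+ k.-1 * hB ^+ k.-1 =
    \sum_(k < size p) cabs p`_k *
      \sum_(j < k) (hC * (2%:R ^+ (2 * k).-1 * hA ^+ k.-1 * hB ^+ k.-1)).
  rewrite (reshape (fun k => 2%:R ^+ (2 * k).-1 * hA ^+ k.-1 * hB ^+ k.-1)) //.
  by congr (_ * _); apply: eq_bigr => k _; rewrite !mulrA.
apply: le_trans (cabs_sum _ _) _; apply: ler_sum => k _.
rewrite qformZl cabsM qform_sum; apply: ler_wpM2l; first exact: cabs_ge0.
apply: le_trans (cabs_sum _ _) _; apply: ler_sum => j _.
rewrite qformE; apply: le_trans (dot_cs _ _) _.
rewrite -vnormE hv mul1r.
have h2A : 0 <= 2%:R * hA := mulr_ge0 two0 hA0.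
have h2B : 0 <= 2%:R * hB := mulr_ge0 two0 hB0.
have obAB : ob AB (2%:R * hA * (2%:R * hB)) := ob_mul h2A (ob_numrad A) (ob_numrad B).
have obBA : ob BA (2%:R * hB * (2%:R * hA)) := ob_mul h2B (ob_numrad B) (ob_numrad A).
have p1 : 0 <= 2%:R * hA * (2%:R * hB) := mulr_ge0 h2A h2B.
have p2 : 0 <= 2%:R * hB * (2%:R * hA) := mulr_ge0 h2B h2A.
set m := (k.-1 - j)%N.
have q1 : 0 <= (2%:R * hA * (2%:R * hB)) ^+ j := exprn_ge0 j p1.
have q2 : 0 <= (2%:R * hA * (2%:R * hB)) ^+ j * (2%:R * hC) :=
  mulr_ge0 q1 (mulr_ge0 two0 hC0).
have o1 := ob_pow p1 obAB j.
have o2 := ob_pow p2 obBA m.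
have o3 := ob_mul q1 o1 (ob_numrad Cm).
have obT := ob_mul q2 o3 o2.
rewrite -[AB ^+ j * Cm * BA ^+ m]/(AB ^+ j *m Cm *m BA ^+ m).
apply: le_trans (obT v) _; rewrite -vnormE hv mulr1 num2.
move: (hjk k j); rewrite -/m => ->.
rewrite nat2; last exact: (leq_ltn_trans (leq0n j) (ltn_ord j)).
by [].
Qed.
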